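(* Consider a robotic system with configuration $\xi\in\mathbb{R}^N$ ($N\ge 2$) obeying the rigid-body dynamics $$\mathcal{M}(\xi)\ddot\xi+\mathcal{C}(\xi,\dot\xi)\dot\xi+g(\xi)=\tau_c+\tau_e,$$ controlled by the damping controller $$\tau_c=g(\xi)+\mathcal{D}(\xi,\dot\xi)\bigl(f(\xi)-\dot\xi\bigr),$$ where the damping matrix $\mathcal{D}(\xi,\dot\xi)$ is the obstacle-aware damping matrix described in the context, and suppose that all damping values (all diagonal entries of the diagonal factors $\mathcal{S}$ in the decompositions $\mathcal{Q}\mathcal{S}\mathcal{Q}^{-1}$ of the damping matrices) are equal to $1$. Let $W(\xi,\dot\xi)=\tfrac12\dot\xi^T\mathcal{M}(\xi)\dot\xi$ be the kinetic energy. Then the closed-loop system is passive with respect to the input–output pair $(\tau_e,\dot\xi)$, with storage function $W$, whenever the velocity is at least as large as the desired velocity, i.e. $$\dot W\le \dot\xi^T\tau_e\qquad\text{for all }\xi\in\mathbb{R}^N\text{ with }\|\dot\xi\|\ge\|f(\xi)\|.$$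
   Context: $\mathcal{M}(\xi)\in\mathbb{R}^{N\times N}$ is the (symmetric positive definite) mass matrix, $\mathcal{C}$ the Coriolis matrix, $g$ the gravity vector, $\tau_c$ the control force and $\tau_e$ the external disturbance force; as for any physical system, $\dot{\mathcal{M}}-2\mathcal{C}$ is skew-symmetric. $f:\mathbb{R}^N\to\mathbb{R}^N$ is a continuous desired velocity field. Obstacles $o=1,\dots,N^{o}$ are described by distance functions $\Gamma_o(\xi)$ with $\Gamma_o>1$ outside, $=1$ on the boundary of the obstacle, and unit surface normals $n_o(\xi)$ pointing away from the obstacle; $\Gamma(\xi)=\min_o\Gamma_o(\xi)$. Averaged normal: $n(\xi)=\sum_{o}n_o(\xi)\,\frac{1/(\Gamma_o(\xi)-1)}{\sum_{p}1/(\Gamma_p(\xi)-1)}$. Danger weight: $w(\xi)=\max\!\bigl(0,\frac{\Gamma^{crit}-\Gamma(\xi)}{\Gamma^{crit}-1}\bigr)\|n(\xi)\|$ with a constant $\Gamma^{crit}>1$. The damping matrix is $\mathcal{D}(\xi,\dot\xi)=(1-w(\xi))\mathcal{D}^f(\xi)+w(\xi)\mathcal{D}^{o}(\xi,\dot\xi)$, where $\mathcal{D}^f=\mathcal{Q}^f\mathcal{S}^f(\mathcal{Q}^f)^{-1}$ with $\mathcal{Q}^f$ an orthonormal basis whose first column is $q_1^f=f/\|f\|$ and $\mathcal{S}^f$ diagonal with positive entries, and $\mathcal{D}^o=\mathcal{Q}^o\mathcal{S}^o(\mathcal{Q}^o)^{-1}$ with $\mathcal{Q}^o$ an orthonormal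 basis whose first column is $n/\|n\|$, second column the normalization of $q_1^f-p\,n/\|n\|$ with $p=\langle n/\|n\|,q_1^f\rangle$ (any orthonormal vector if $|p|=1$), and $\mathcal{S}^o$ diagonal with positive entries. In this lemma all diagonal entries of $\mathcal{S}^f$ and $\mathcal{S}^o$ equal $1$. *)

(* Defs.v *)
From HB Require Import structures.
From mathcomp Require Import all_boot all_order all_algebra.
From mathcomp Require Import all_classical all_reals all_analysis.
Set Implicit Arguments. Unset Strict Implicit. Unset Printing Implicit Defensive.
Import Order.TTheory GRing.Theory Num.Theory.
Import numFieldNormedType.Exports.
Local Open Scope ring_scope.

Section Damping.
Variables (R : realType) (n : nat).
Local Notation N := n.+2.
Local Notation vec := 'cV[R]_N.
Local Notation mat := 'M[R]_N.

Definition dotv (u v : vec) : R := (u^T *m v) 0 0.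
Definition vnorm (v : vec) : R := Num.sqrt (dotv v v).

Definition orthonormal (Q : mat) : Prop := Q^T *m Q = 1%:M.

(* the obstacles o = 1..No+1 (at least one obstacle) *)
Variables (No : nat) (Gam : 'I_No.+1 -> vec -> R) (nrm : 'I_No.+1 -> vec -> vec)
          (Gcrit : R).

Definition Gamma (x : vec) : R := \big[Num.min/Gam ord0 x]_(o < No.+1) Gam o x.

Definition navg (x : vec) : vec :=
  \sum_(o < No.+1)
     (((Gam o x - 1)^-1 / \sum_(p < No.+1) (Gam p x - 1)^-1) *: nrm o x).

Definition wdanger (x : vec) : R :=
  Num.max 0 ((Gcrit - Gamma x) / (Gcrit - 1)) * vnorm (navg x).

(* first column of Q^f : f / ||f|| *)
Definition q1f (f : vec -> vec) (x : vec) : vec := (vnorm (f x))^-1 *: f x.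

Definition Qf_valid (f : vec -> vec) (x : vec) (Q : mat) : Prop :=
  orthonormal Q /\ (f x != 0 -> col 0 Q = q1f f x).

Definition Qo_valid (f : vec -> vec) (x : vec) (Q : mat) : Prop :=
  orthonormal Q /\
  (navg x != 0 ->
     let nh := (vnorm (navg x))^-1 *: navg x in
     col 0 Q = nh /\
     (f x != 0 ->
        let p := dotv nh (q1f f x) in
        `|p| != 1 ->
        col (inord 1) Q = (vnorm (q1f f x - p *: nh))^-1 *: (q1f f x - p *: nh))).

Definition Dmat (x : vec) (Qf Qo : mat) (sf so : 'rV[R]_N) : mat :=
  (1 - wdanger x) *: (Qf *m diag_mx sf *m invmx Qf)
  + wdanger x *: (Qo *m diag_mx so *m invmx Qo).

End Damping.

(* Main.v *)
Require Import Defs.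
From HB Require Import structures.
From mathcomp Require Import all_boot all_order all_algebra.
From mathcomp Require Import all_classical all_reals all_analysis.
Import Order.TTheory GRing.Theory Num.Theory.
Import numFieldNormedType.Exports.
Local Open Scope ring_scope.
From mathcomp Require Import lra.


Section H.
Variable R : realType.

Lemma is_derive_entry m n (F : R -> 'M[R]_(m,n)) t (dF : 'M[R]_(m,n)) i j :
  is_derive t (1:R) F dF -> is_derive t (1:R) (fun s => F s i j) (dF i j).
Proof.
move=> [d v]; apply: DeriveDef.
  by move/derivable_mxP: d; apply.
by move: (derive_mx d); rewrite v => ->; rewrite mxE.
Qed.

Lemma is_derive_mx m n (F : R -> 'M[R]_(m,n)) t (dF : 'M[R]_(m,n)) :
  (forall i j, is_derive t (1:R) (fun s => F s i j) (dF i j)) -> is_derive t (1:R) F dF.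
Proof.
move=> H.
have d : derivable F t 1 by apply/derivable_mxP => i j; case: (H i j).
apply: DeriveDef => //.
rewrite (derive_mx d); apply/matrixP => i j; rewrite mxE.
by case: (H i j).
Qed.

Lemma is_derive_mulmx m n p (F : R -> 'M[R]_(m,n)) (G : R -> 'M[R]_(n,p)) t (dF : 'M[R]_(m,n)) (dG : 'M[R]_(n,p)) :
  is_derive t (1:R) F dF -> is_derive t (1:R) G dG ->
  is_derive t (1:R) (fun s => F s *m G s) (dF *m G t + F t *m dG).
Proof.
move=> HF HG; apply: is_derive_mx => i j.
have -> : (fun s => (F s *m G s) i j) = \sum_(k < n) ((fun s => F s i k) * (fun s => G s k j)).
  by apply/funext => s; rewrite !mxE fct_sumE.
rewrite !mxE -big_split /=.
apply: is_derive_eq.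
  apply: is_derive_sum => k.
  apply: is_deriveM; [exact: is_derive_entry HF| exact: is_derive_entry HG].
by apply: eq_bigr => k _ /=; rewrite addrC; congr (_ + _); exact: mulrC.
Qed.

Lemma is_derive_tr m n (F : R -> 'M[R]_(m,n)) t (dF : 'M[R]_(m,n)) :
  is_derive t (1:R) F dF -> is_derive t (1:R) (fun s => (F s)^T) dF^T.
Proof.
move=> HF; apply: is_derive_mx => i j; rewrite mxE.
have -> : (fun s => (F s)^T i j) = (fun s => F s j i) by apply/funext => s; rewrite mxE.
exact: is_derive_entry.
Qed.
End H.

Section H2.
Variable R : realType.
Lemma e00D (A B : 'M[R]_1) : (A + B) 0 0 = A 0 0 + B 0 0.
Proof. by rewrite mxE. Qed.
Lemma e00B (A B : 'M[R]_1) : (A - B) 0 0 = A 0 0 - B 0 0.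
Proof. by rewrite !mxE. Qed.
Lemma e00Z (c : R) (A : 'M[R]_1) : (c *: A) 0 0 = c * A 0 0.
Proof. by rewrite mxE. Qed.
Lemma e00T (A : 'M[R]_1) : A^T 0 0 = A 0 0.
Proof. by rewrite mxE. Qed.

Lemma dotvE k (u v : 'cV[R]_k.+2) : dotv u v = \sum_i u i 0 * v i 0.
Proof. by rewrite /dotv mxE; apply: eq_bigr => i _; rewrite mxE. Qed.

Lemma dotv_ge0 k (u : 'cV[R]_k.+2) : 0 <= dotv u u.
Proof. by rewrite dotvE; apply: sumr_ge0 => i _; rewrite -expr2 sqr_ge0. Qed.

Lemma dotvC k (u v : 'cV[R]_k.+2) : dotv u v = dotv v u.
Proof. by rewrite !dotvE; apply: eq_bigr => i _; rewrite mulrC. Qed.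

Lemma dotvBr k (u v w : 'cV[R]_k.+2) : dotv u (v - w) = dotv u v - dotv u w.
Proof. by rewrite /dotv mulmxBr e00B. Qed.

Lemma dotvBl k (u v w : 'cV[R]_k.+2) : dotv (v - w) u = dotv v u - dotv w u.
Proof. by rewrite dotvC dotvBr !(dotvC _ u). Qed.

Lemma cs_bound k (a f : 'cV[R]_k.+2) : vnorm f <= vnorm a -> dotv a (f - a) <= 0.
Proof.
move=> H.
have H1 : dotv f f <= dotv a a by rewrite /vnorm ler_sqrt ?dotv_ge0 in H.
have H2 := dotv_ge0 _ (a - f).
rewrite dotvBl !dotvBr (dotvC _ f a) in H2.
rewrite dotvBr.
lra.
Qed.
End H2.

Theorem lemma3p1 (R : realType) (n : nat)
  (M : 'cV[R]_n.+2 -> 'M[R]_n.+2)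
  (C : 'cV[R]_n.+2 -> 'cV[R]_n.+2 -> 'M[R]_n.+2)
  (g f : 'cV[R]_n.+2 -> 'cV[R]_n.+2)
  (No : nat) (Gam : 'I_No.+1 -> 'cV[R]_n.+2 -> R)
  (nrm : 'I_No.+1 -> 'cV[R]_n.+2 -> 'cV[R]_n.+2) (Gcrit : R)
  (Qf : 'cV[R]_n.+2 -> 'M[R]_n.+2)
  (Qo : 'cV[R]_n.+2 -> 'cV[R]_n.+2 -> 'M[R]_n.+2)
  (xi dxi ddxi tau_e : R -> 'cV[R]_n.+2) (dM : R -> 'M[R]_n.+2) :
  (* mass matrix symmetric positive definite *)
  (forall x, (M x)^T = M x) ->
  (forall x v, v != 0 -> 0 < dotv v (M x *m v)) ->
  (* obstacle data *)
  (forall o x, vnorm (nrm o x) = 1) ->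
  1 < Gcrit ->
  (* admissible bases for the damping matrices *)
  (forall x, Qf_valid f x (Qf x)) ->
  (forall x v, Qo_valid Gam nrm f x (Qo x v)) ->
  (* trajectory: velocity, acceleration, time derivative of M(xi(t)) *)
  (forall t : R, is_derive t (1:R) xi (dxi t)) ->
  (forall t : R, is_derive t (1:R) dxi (ddxi t)) ->
  (forall t : R, is_derive t (1:R) (M \o xi) (dM t)) ->
  (* dM/dt - 2 C is skew-symmetric *)
  (forall t, (dM t - 2%:R *: C (xi t) (dxi t))^T
             = - (dM t - 2%:R *: C (xi t) (dxi t))) ->
  (* closed-loop dynamics with the damping controller, all damping values = 1 *)
  (forall t,
     M (xi t) *m ddxi t + C (xi t) (dxi t) *m dxi t + g (xi t)
     = (g (xi t) + Dmat Gam nrm Gcrit (xi t) (Qf (xi t)) (Qo (xi t) (dxi t))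
                        (const_mx 1) (const_mx 1) *m (f (xi t) - dxi t))
       + tau_e t) ->
  let W := fun t => 2%:R^-1 * dotv (dxi t) (M (xi t) *m dxi t) in
  forall t, vnorm (f (xi t)) <= vnorm (dxi t) ->
    derivable W t (1:R) /\ derive1 W t <= dotv (dxi t) (tau_e t).
Proof.
move=> Msym Mpd _ _ HQf HQo Hxi Hdxi HdM Hskew Hdyn W t Hft.
set a := dxi t; set b := ddxi t; set Mx := M (xi t); set Cx := C (xi t) (dxi t).
set dMx := dM t.
pose h := fun s => (dxi s)^T *m ((M \o xi) s *m dxi s).
have Hh : is_derive t (1:R) h (b^T *m (Mx *m a) + a^T *m (dMx *m a + Mx *m b)).
  apply: is_derive_mulmx; first exact: is_derive_tr.
  exact: is_derive_mulmx.
have HW : is_derive t (1:R) W (2%:R^-1 * (b^T *m (Mx *m a) + a^T *m (dMx *m a + Mx *m b)) 0 0).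
  have -> : W = 2%:R^-1 *: (fun s => h s 0 0) by apply/funext => s.
  apply: is_deriveZ; exact: is_derive_entry.
split; first by case: HW.
rewrite derive1E derive_val.
have D1 : forall x Q Q', Q^T *m Q = 1%:M -> Q'^T *m Q' = 1%:M ->
    Dmat Gam nrm Gcrit x Q Q' (const_mx 1) (const_mx 1) = 1%:M.
  move=> x Q Q' HQ HQ'.
  rewrite /Dmat diag_const_mx !mulmx1 !mulmxV; last 2 first.
  - by case: (mulmx1_unit HQ').
  - by case: (mulmx1_unit HQ).
  by rewrite -scalerDl subrK scale1r.
have Hd := Hdyn t.
rewrite D1 in Hd; last 2 first.
- by case: (HQf (xi t)).
- by case: (HQo (xi t) (dxi t)).
move: Hd; rewrite -/a -/b -/Mx -/Cx mul1mx => Hd.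
have Hb : Mx *m b = (f (xi t) - a) + tau_e t - Cx *m a.
  have -> : Mx *m b = (Mx *m b + Cx *m a + g (xi t)) - g (xi t) - Cx *m a
    by rewrite (addrK (g (xi t))) (addrK (Cx *m a)).
  by rewrite Hd; congr (_ - _); rewrite [g (xi t) + _]addrC addrAC addrK.
have Q1 : (b^T *m (Mx *m a)) 0 0 = (a^T *m (Mx *m b)) 0 0.
  by rewrite -e00T !trmx_mul trmxK Msym mulmxA.
have Hs : (a^T *m ((dMx - 2%:R *: Cx) *m a)) 0 0 = 0.
  have e : (a^T *m ((dMx - 2%:R *: Cx) *m a)) 0 0
         = - (a^T *m ((dMx - 2%:R *: Cx) *m a)) 0 0.
    rewrite -{1}e00T !trmx_mul trmxK Hskew -mulmxA mulNmx mulmxN.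
    by rewrite mxE.
  lra.
rewrite mulmxBl mulmxBr -scalemxAl -scalemxAr e00B e00Z in Hs.
have Hcs : (a^T *m (f (xi t) - a)) 0 0 <= 0 := @cs_bound R _ _ _ Hft.
rewrite /dotv mulmxDr !e00D Q1 Hb mulmxBr mulmxDr !e00B !e00D.
rewrite mulmxBr e00B in Hcs.
rewrite !mulmxBr !e00B. lra.
Qed.
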